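(* Let $G=(V,E)$ be an undirected graph with $n=|V|$, fix an orientation of its edges, and let $P\subseteq\mathbb{R}^E$ be the matching polytope of $G$. Then $P=\operatorname{conv}\{x\in\mathbb{R}^E_{\geq0}: x(\delta(v))\leq1\text{ and }x(\delta^+(v))\in\mathbb{Z}\text{ for every }v\in V\}$. In particular, $P$ admits a MILEF of size $O(n^2)$ with $n$ integer variables.
   Context: For $v\in V$, $\delta(v)$ is the set of edges incident to $v$, and $\delta^+(v)$ (resp. $\delta^-(v)$) the set of edges entering (resp. leaving) $v$ under the fixed orientation. For $F\subseteq E$, $x(F)=\sum_{e\in F}x_e$. The matching polytope is the convex hull of characteristic vectors of matchings (edge sets in which every vertex has degree at most one). A MILEF of a convex set $P\subseteq\mathbb{R}^d$ is a triple $(Q,\sigma,\pi)$ with $Q\subseteq\mathbb{R}^\ell$ a polyhedron, $\sigma:\mathbb{R}^\ell\to\mathbb{R}^k$, $\pi:\mathbb{R}^\ell\to\mathbb{R}^d$ affine, and $P=\operatorname{conv}(\pi(Q\cap\sigma^{-1}(\mathbb{Z}^k)))$; its size is the number of facets of $Q$ and $k$ is its number of integer variables. *)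

(* Defs.v *)
From HB Require Import structures.
From mathcomp Require Import all_boot all_order all_algebra.
From mathcomp Require Import reals.
Set Implicit Arguments. Unset Strict Implicit. Unset Printing Implicit Defensive.
Import Order.TTheory GRing.Theory Num.Theory.
Local Open Scope ring_scope.

(* A finite simple graph G = (V, E) with a fixed orientation: every edge e
   has a tail (the vertex it leaves) and a head (the vertex it enters). *)
Definition oriented_simple_graph (V E : finType) (tail head : E -> V) : Prop :=
  (forall e, tail e != head e) /\
  (forall e f, ((tail e == tail f) && (head e == head f)) ||
               ((tail e == head f) && (head e == tail f)) -> e = f).

Definition x_delta (R : realType) (V E : finType) (tail head : E -> V)
  (x : E -> R) (v : V) : R :=
  \sum_(e : E | (tail e == v) || (head e == v)) x e.

Definition x_delta_in (R : realType) (V E : finType) (tail head : E -> V)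
  (x : E -> R) (v : V) : R :=
  \sum_(e : E | head e == v) x e.

Definition is_int (R : realType) (r : R) : Prop := exists z : int, r = z%:~R.

Definition conv (R : realType) (E : finType) (S : (E -> R) -> Prop) : (E -> R) -> Prop :=
  fun x => exists (k : nat) (p : 'I_k -> E -> R) (lam : 'I_k -> R),
    (forall i, S (p i)) /\ (forall i, 0 <= lam i) /\ (\sum_(i < k) lam i = 1) /\
    (forall e, x e = \sum_(i < k) lam i * p i e).

Definition is_matching (V E : finType) (tail head : E -> V) (M : {set E}) : Prop :=
  forall v, (#|[set e in M | (tail e == v) || (head e == v)]| <= 1)%N.

Definition char_vec (R : realType) (E : finType) (M : {set E}) : E -> R :=
  fun e => (e \in M)%:R.

Definition matching_polytope (R : realType) (V E : finType) (tail head : E -> V)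
  : (E -> R) -> Prop :=
  conv (fun x => exists M : {set E}, is_matching tail head M /\ x = char_vec R M).

Definition relaxed_set (R : realType) (V E : finType) (tail head : E -> V)
  : (E -> R) -> Prop :=
  fun x => (forall e, 0 <= x e) /\
           (forall v, x_delta tail head x v <= 1) /\
           (forall v, is_int (x_delta_in tail head x v)).

(* MILEF (Q, sigma, pi) of a set P of R^E with Q = {y in R^l : A y <= b} given by
   m inequalities, sigma y = S y + s (k integer variables),
   pi y = T y + t, R^{#|E|} identified with R^E via enum_rank.
   Its size (number of facets of Q) is at most m. *)
Definition milef_with (R : realType) (E : finType) (P : (E -> R) -> Prop)
  (l m k : nat) (A : 'M[R]_(m, l)) (b : 'cV[R]_m)
  (S : 'M[R]_(k, l)) (s : 'cV[R]_k) (T : 'M[R]_(#|E|, l)) (t : 'cV[R]_#|E|) : Prop :=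
  P = conv (fun x => exists y : 'cV[R]_l,
            (forall i, (A *m y) i 0 <= b i 0) /\
            (forall j, is_int ((S *m y + s) j 0)) /\
            x = (fun e => (T *m y + t) (enum_rank e) 0)).

(* Main.v *)
Require Import Defs.
From HB Require Import structures.
From mathcomp Require Import all_boot all_order all_algebra.
From mathcomp Require Import reals.
Import Order.TTheory GRing.Theory Num.Theory.
Local Open Scope ring_scope.
From mathcomp Require Import boolp.
From mathcomp.algebra_tactics Require Import ring lra.
From mathcomp Require Import zify.
Import Order.TTheory GRing.Theory Num.Theory.
Local Open Scope ring_scope.
Set Implicit Arguments. Unset Strict Implicit. Unset Printing Implicit Defensive.

Section ConvLemmas.
Variables (R : realType) (E : finType) (S : (E -> R) -> Prop).

Definition W (s : R) (x : E -> R) : Prop :=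
  exists (k : nat) (p : 'I_k -> E -> R) (lam : 'I_k -> R),
    (forall i, S (p i)) /\ (forall i, 0 <= lam i) /\ (\sum_(i < k) lam i = s) /\
    (forall e, x e = \sum_(i < k) lam i * p i e).

Lemma convW x : conv S x <-> W 1 x.
Proof. by []. Qed.

Lemma W0 : W 0 (fun _ => 0).
Proof.
exists 0%N, (fun _ _ => 0), (fun _ => 0); split; first by case.
split; first by case.
by split; [rewrite big_ord0 | move=> e; rewrite big_ord0].
Qed.

Lemma Wext s x y : W s x -> (forall e, x e = y e) -> W s y.
Proof.
move=> [k [p [lam [H1 [H2 [H3 H4]]]]]] Hxy.
exists k, p, lam; do 3 split => //.
by move=> e; rewrite -Hxy.
Qed.

Lemma Wscale s x c : W s x -> 0 <= c -> W (c * s) (fun e => c * x e).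
Proof.
move=> [k [p [lam [H1 [H2 [H3 H4]]]]]] Hc.
exists k, p, (fun i => c * lam i); split => //; split.
  by move=> i; apply: mulr_ge0.
split; first by rewrite -mulr_sumr H3.
move=> e; rewrite H4 mulr_sumr; apply: eq_bigr => i _; by rewrite mulrA.
Qed.

Lemma Wadd s t x y : W s x -> W t y -> W (s + t) (fun e => x e + y e).
Proof.
move=> [k1 [p1 [l1 [H1 [H2 [H3 H4]]]]]] [k2 [p2 [l2 [G1 [G2 [G3 G4]]]]]].
pose p (i : 'I_(k1 + k2)) := match split i with inl a => p1 a | inr b => p2 b end.
pose l (i : 'I_(k1 + k2)) := match split i with inl a => l1 a | inr b => l2 b end.
have hl : forall i : 'I_k1, split (lshift k2 i) = inl i :=
  fun i => unsplitK (inl i : 'I_k1 + 'I_k2).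
have hr : forall i : 'I_k2, split (rshift k1 i) = inr i :=
  fun i => unsplitK (inr i : 'I_k1 + 'I_k2).
exists (k1 + k2)%N, p, l; split.
  by move=> i; rewrite /p; case: (split i).
split; first by move=> i; rewrite /l; case: (split i).
split.
  rewrite big_split_ord /= -H3 -G3; congr (_ + _); apply: eq_bigr => i _;
  by rewrite /l ?hl ?hr.
move=> e; rewrite H4 G4 big_split_ord /=; congr (_ + _); apply: eq_bigr => i _;
  by rewrite /l /p ?hl ?hr.
Qed.

Lemma Wsum k (q : 'I_k -> E -> R) (lam : 'I_k -> R) :
  (forall i, W 1 (q i)) -> (forall i, 0 <= lam i) ->
  W (\sum_(i < k) lam i) (fun e => \sum_(i < k) lam i * q i e).
Proof.
elim: k q lam => [|k IH] q lam Hq Hl.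
  apply: Wext; first by rewrite big_ord0; exact: W0.
  by move=> e; rewrite big_ord0.
rewrite big_ord_recr /=.
apply: Wext.
  apply: Wadd; first exact: (IH (fun i => q (widen_ord (leqnSn k) i))
                                 (fun i => lam (widen_ord (leqnSn k) i))).
  rewrite -[lam ord_max]mulr1; apply: Wscale => //; exact: Hq.
by move=> e; rewrite big_ord_recr.
Qed.

Lemma conv_conv x : conv (conv S) x -> conv S x.
Proof.
move=> [k [p [lam [H1 [H2 [H3 H4]]]]]].
apply/convW; rewrite -H3.
apply: (Wext (Wsum (q := p) (lam := lam) H1 H2)).
by move=> e; rewrite H4.
Qed.

Lemma conv_mono (T : (E -> R) -> Prop) x :
  (forall y, S y -> T y) -> conv S x -> conv T x.
Proof.
move=> ST [k [p [lam [H1 H2]]]]; exists k, p, lam; split => //; move=> i; exact: ST.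
Qed.

Lemma conv_in x : S x -> conv S x.
Proof.
move=> Sx; exists 1%N, (fun _ => x), (fun _ => 1); split => //.
split => //; split; first by rewrite big_ord1.
by move=> e; rewrite big_ord1 mul1r.
Qed.

Lemma conv2 x y (mu : R) : conv S x -> conv S y -> 0 <= mu -> mu <= 1 ->
  conv S (fun e => mu * x e + (1 - mu) * y e).
Proof.
move=> /convW Hx /convW Hy H0 H1; apply/convW.
have H1' : 0 <= 1 - mu by lra.
have := Wadd (Wscale Hx H0) (Wscale Hy H1').
by rewrite !mulr1 addrC subrK.
Qed.

End ConvLemmas.

Lemma argmin_step (R : realType) (I : finType) (a b : I -> R) :
  (forall i, 0 <= a i) -> (forall i, a i = 0 -> 0 <= b i) -> (exists i, b i < 0) ->
  exists eps, 0 < eps /\ (forall i, 0 <= a i + eps * b i) /\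
              exists i, 0 < a i /\ a i + eps * b i = 0.
Proof.
move=> Ha Hb [i0 Hi0].
case: (@arg_minP _ _ _ i0 [pred i | b i < 0] (fun i => a i / - b i) Hi0)
  => i Pi Hmin.
rewrite inE /= in Pi.
have ai : 0 < a i.
  rewrite lt_neqAle Ha andbT; apply/negP => /eqP H.
  by have := Hb i (esym H); rewrite leNgt Pi.
exists (a i / - b i); split; first by rewrite divr_gt0 // oppr_gt0.
split; last first.
  exists i; split => //; field; lra.
move=> j; case: (ltP (b j) 0) => bj; last first.
  by rewrite addr_ge0 // mulr_ge0 // divr_ge0 // ?Ha // oppr_ge0 ltW.
have := Hmin j; rewrite inE /= => /(_ bj) H.
have hb : 0 < - b j by rewrite oppr_gt0.
rewrite ler_pdivlMr // in H.
have hbi : b i != 0 by rewrite lt_eqF.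
have : a i / - b i * - b j <= a j by [].
lra.
Qed.

Section Core.
Variables (R : realType) (V E : finType) (tail head : E -> V).
Hypothesis noloop : forall e, tail e != head e.
Variable side : V -> bool.

Local Notation xd := (@x_delta R V E tail head).

Definition good (x : E -> R) :=
  (forall e, 0 <= x e) /\ (forall v, xd x v <= 1) /\
  (forall e, x e != 0 -> ~~ side (tail e) && side (head e)).

Definition Fs (x : E -> R) := [set e | (0 < x e) && (x e < 1)].
Definition NT (x : E -> R) := [set v | xd x v < 1].
Definition mu (x : E -> R) := (#|Fs x| + #|NT x|)%N.

Lemma xd_lin x d c v : xd (fun e => x e + c * d e) v = xd x v + c * xd d v.
Proof. by rewrite /x_delta big_split /= mulr_sumr. Qed.

Lemma xd_ge x v e : (forall e, 0 <= x e) -> (tail e == v) || (head e == v) ->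
  x e <= xd x v.
Proof.
move=> H0 He; rewrite /x_delta (bigD1 e) //= lerDl.
by apply: sumr_ge0 => i _; apply: H0.
Qed.

Lemma xe_le1 x e : good x -> x e <= 1.
Proof.
move=> [H0 [H1 _]]; apply: le_trans (H1 (tail e)).
by apply: xd_ge => //; rewrite eqxx.
Qed.


Definition Mat (y : E -> R) :=
  exists M : {set E}, is_matching tail head M /\ y = char_vec R M.

Lemma int_case x : good x -> Fs x = set0 -> conv Mat x.
Proof.
move=> gx HF; have [H0 [H1 H2]] := gx.
have h01 : forall e, x e = 0 \/ x e = 1.
  move=> e; have : e \notin Fs x by rewrite HF inE.
  rewrite inE negb_and -!leNgt => /orP [h|h].
    by left; apply/eqP; rewrite eq_le h H0.
  by right; apply/eqP; rewrite eq_le h xe_le1.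
pose M := [set e | x e == 1].
have xM : x = char_vec R M.
  apply/funext => e; rewrite /char_vec inE.
  by case: (h01 e) => ->; rewrite ?eqxx // (eqr_nat R 0 1).
apply: conv_in; exists M; split => // v.
rewrite -(ler_nat R).
have -> : [set e in M | (tail e == v) || (head e == v)] =
          [set e | ((tail e == v) || (head e == v)) && (e \in M)].
  by apply/setP => e; rewrite !inE andbC.
rewrite -sum1dep_card natr_sum big_mkcondr /=.
apply: le_trans (H1 v); rewrite /x_delta le_eqVlt; apply/orP; left; apply/eqP.
apply: eq_bigr => e _; rewrite xM /char_vec; by case: (e \in M).
Qed.

Lemma step x d : good x -> (forall e, d e != 0 -> e \in Fs x) ->
  (forall v, xd x v = 1 -> xd d v = 0) -> (exists e, d e != 0) ->
  exists eps, 0 < eps /\ good (fun e => x e + eps * d e) /\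
    (mu (fun e => (x e + eps * d e)%R) < mu x)%N.
Proof.
move=> gx dF dT [e1 He1]; have [H0 [H1 H2]] := gx.
have dx0 : forall e, x e = 0 -> d e = 0.
  move=> e xe; apply/eqP; apply/negP => /negP /dF; rewrite inE xe.
  by rewrite ltxx.
pose a := fun i : E + V => match i with inl e => x e | inr v => 1 - xd x v end.
pose b := fun i : E + V => match i with inl e => d e | inr v => - xd d v end.
have ha : forall i, 0 <= a i.
  by case => [e|v] /=; [apply: H0 | rewrite subr_ge0; apply: H1].
have hb : forall i, a i = 0 -> 0 <= b i.
  case => [e|v] /= h; first by rewrite dx0.
  by rewrite dT ?oppr0 //; lra.
have hneg : exists i, b i < 0.
  case: (pickP (fun e => d e < 0)) => [e He | Hn]; first by exists (inl e).
  have dpos : forall e, 0 <= d e by move=> e; rewrite leNgt Hn.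
  exists (inr (head e1)) => /=; rewrite oppr_lt0.
  apply: lt_le_trans (xd_ge (e := e1) dpos _); last by rewrite eqxx orbT.
  by rewrite lt_neqAle eq_sym He1 dpos.
have [eps [Heps [Hall [i [ai Hi]]]]] := argmin_step ha hb hneg.
pose y := fun e => x e + eps * d e.
have gy : good y.
  split; first by move=> e; exact: (Hall (inl e)).
  split.
    move=> v; rewrite /y xd_lin; have := Hall (inr v); rewrite /=; lra.
  move=> e; rewrite /y; have [xe|xe] := eqVneq (x e) 0; last by move=> _; apply: H2.
  by rewrite xe dx0 // mulr0 addr0 eqxx.
exists eps; split => //; split => //.
have sF : Fs y \subset Fs x.
  apply/subsetP => e; have [de|de] := eqVneq (d e) 0; last by move=> _; apply: dF.
  by rewrite !inE /y de mulr0 addr0.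
have sN : NT y \subset NT x.
  apply/subsetP => v; rewrite !inE /y xd_lin.
  have [xv|xv] := eqVneq (xd x v) 1; last by move=> _; rewrite lt_neqAle xv H1.
  by rewrite dT // mulr0 addr0 xv ltxx.
change (#|Fs y| + #|NT y| < #|Fs x| + #|NT x|)%N; case: i ai Hi => [e|v] /= ai Hi.
  have pF : Fs y \proper Fs x.
    apply/properP; split => //; exists e.
      apply: dF; apply/eqP => de; move: Hi; rewrite de mulr0 addr0; lra.
    by rewrite inE /y Hi ltxx.
  have := proper_card pF; have := subset_leq_card sN; lia.
have pN : NT y \proper NT x.
  apply/properP; split => //; exists v; first by rewrite inE; lra.
  rewrite inE /y xd_lin; lra.
have := proper_card pN; have := subset_leq_card sF; lia.
Qed.

Lemma sum2_ger (I : finType) (P : pred I) (f : I -> R) a b :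
  (forall i, P i -> 0 <= f i) -> P a -> P b -> a != b ->
  f a + f b <= \sum_(i | P i) f i.
Proof.
move=> H Pa Pb ab; rewrite (bigD1 a) //= (bigD1 b) /=; last by rewrite Pb eq_sym ab.
rewrite addrA lerDl; apply: sumr_ge0 => i /andP [/andP [Pi _] _]; exact: H.
Qed.

Lemma sum2_gen (I : finType) (P : pred I) (f : I -> nat) a b :
  P a -> P b -> a != b -> (f a + f b <= \sum_(i | P i) f i)%N.
Proof.
move=> Pa Pb ab; rewrite (bigD1 a) //= (bigD1 b) /=; last by rewrite Pb eq_sym ab.
by rewrite addnA leq_addr.
Qed.

Lemma sum_eqn (T : finType) (A : pred T) (a : T) :
  (\sum_(v in A) (a == v) = (a \in A))%N.
Proof.
case: (boolP (a \in A)) => Ha.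
  rewrite (bigD1 a) //= eqxx big1 // => v /andP [_ /negbTE]; by rewrite eq_sym => ->.
by rewrite big1 // => v Hv; apply/eqP; rewrite eqb0; apply/eqP => av; rewrite av Hv in Ha.
Qed.

Definition inc e v := (tail e == v) || (head e == v).

Lemma inc_nat e v : (inc e v : nat) = ((tail e == v) + (head e == v))%N.
Proof.
rewrite /inc; case: (eqVneq (tail e) v) => [<-|] /=.
  by rewrite eq_sym (negbTE (noloop e)).
by case: (head e == v).
Qed.

Lemma deg2 x e1 v : good x -> e1 \in Fs x -> inc e1 v -> xd x v = 1 ->
  (2 <= \sum_(e in Fs x) inc e v)%N.
Proof.
move=> [H0 [H1 H2]] He1 hinc tight.
case: (pickP (fun e2 => (e2 \in Fs x) && (e2 != e1) && inc e2 v)) => [e2 /andP [/andP [F2 n21] i2] | Hn].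
  apply: leq_trans (sum2_gen (fun e => inc e v : nat) He1 F2 _) => /=.
    by rewrite hinc i2.
  by rewrite eq_sym.
exfalso.
have [xe0 xe1] : 0 < x e1 /\ x e1 < 1 by move: He1; rewrite inE => /andP [].
case: (pickP (fun e3 => inc e3 v && (e3 != e1) && (x e3 != 0))) => [e3 /andP [/andP [i3 n31] x3] | Hn3].
  have F3 : e3 \notin Fs x by apply/negP => F3; have := Hn e3; rewrite F3 n31 i3.
  have x3ge : 1 <= x e3.
    move: F3; rewrite inE negb_and -!leNgt => /orP [h|//].
    by move: x3; rewrite eq_le h H0.
  have ne31 : e1 != e3 by rewrite eq_sym.
  have h : x e1 + x e3 <= xd x v :=
    sum2_ger (P := fun e => inc e v) (fun i _ => H0 i) hinc i3 ne31.
  have := H0 e1; lra.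
have : xd x v = x e1.
  rewrite /x_delta (bigD1 e1) //= big1 ?addr0 // => e /andP [ie ne].
  by apply/eqP; have := Hn3 e; rewrite /inc ie ne /= => /negbFE.
lra.
Qed.

Lemma exists_d x e0 : good x -> e0 \in Fs x ->
  exists d : E -> R, (forall e, d e != 0 -> e \in Fs x) /\
    (forall v, xd x v = 1 -> xd d v = 0) /\ exists e, d e != 0.
Proof.
move=> gx He0; have [H0 [H1 H2]] := gx.
set F := Fs x.
pose Tv := [set v | (xd x v == 1) && [exists e, (e \in F) && inc e v]].
have count : (\sum_(v in Tv) \sum_(e in F) inc e v =
              \sum_(e in F) ((tail e \in Tv) + (head e \in Tv)))%N.
  rewrite exchange_big; apply: eq_bigr => e _.
  under eq_bigr => v _ do rewrite inc_nat.
  by rewrite big_split /= !sum_eqn.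
have lowb : (2 * #|Tv| <= \sum_(e in F) ((tail e \in Tv) + (head e \in Tv)))%N.
  rewrite -count mulnC -sum_nat_const; apply: leq_sum => v.
  rewrite inE => /andP [/eqP tight /existsP [e1 /andP [F1 i1]]].
  exact: (deg2 gx F1 i1 tight).
pose B : 'M[R]_(#|F|, #|Tv|) :=
  \matrix_(i < #|F|, j < #|Tv|) (inc (enum_val i) (enum_val j))%:R.
have nrf : ~~ row_free B.
  case: (boolP [forall e in F, (tail e \in Tv) && (head e \in Tv)]) => allT; last first.
    move/forallPn: allT => [es]; rewrite negb_imply => /andP [Fes bad].
    have h : (\sum_(e in F) (((tail e \in Tv) + (head e \in Tv)) + (es == e))
              <= \sum_(e in F) 2)%N.
      apply: leq_sum => e _; case: (eqVneq es e) => [<-|_].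
        by move: bad; case: (tail es \in Tv); case: (head es \in Tv).
      by case: (tail e \in Tv); case: (head e \in Tv).
    rewrite big_split /= sum_eqn Fes sum_nat_const in h.
    rewrite -row_leq_rank; have := rank_leq_col B; lia.
  move/forall_inP: allT => allT.
  have hc : (\sum_(e in F) ((tail e \in Tv) + (head e \in Tv)) = \sum_(e in F) 2)%N.
    by apply: eq_bigr => e /allT /andP [-> ->].
  rewrite hc sum_nat_const in lowb.
  have tailT : tail e0 \in Tv by have /andP [] := allT e0 He0.
  pose u : 'rV[R]_#|Tv| := \row_(j < #|Tv|) (if side (enum_val j) then 1 else -1).
  have uB : u *m B^T = 0.
    apply/rowP => i; rewrite !mxE; under eq_bigr => j _ do rewrite !mxE.
    set e := enum_val i.
    have Fe : e \in F by apply: enum_valP.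
    rewrite -(big_enum_val (A := mem Tv) (fun v => (if side v then 1 else -1) * (inc e v)%:R)).
    have /andP [tT hT] := allT e Fe.
    have xe : x e != 0 by move: Fe; rewrite inE => /andP [h _]; rewrite gt_eqF.
    have /andP [st sh] := H2 e xe.
    have nth : head e != tail e by rewrite eq_sym noloop.
    rewrite (bigD1 (tail e)) //= (bigD1 (head e)) /=; last by rewrite hT nth.
    rewrite big1; last first.
      move=> v /andP [/andP [_ n1] n2]; rewrite /inc.
      by rewrite eq_sym (negbTE n1) eq_sym (negbTE n2) mulr0.
    rewrite (negbTE st) sh /inc !eqxx orbT /=; ring.
  have u0 : u != 0.
    apply/eqP => /rowP /(_ (enum_rank_in tailT (tail e0))); rewrite !mxE.
    case: (side _) => /eqP; by rewrite ?oppr_eq0 oner_eq0.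
  have kn : kermx B^T != 0.
    apply/negP => /eqP K0; have : (u <= kermx B^T)%MS by apply/sub_kermxP.
    by rewrite K0 submx0 (negbTE u0).
  rewrite kermx_eq0 -row_leq_rank mxrank_tr in kn.
  rewrite -row_leq_rank; lia.
rewrite -kermx_eq0 in nrf.
set K := kermx B in nrf.
have [[i j] Hij] : exists ij : 'I_#|F| * 'I_#|F|, K ij.1 ij.2 != 0.
  case: (pickP (fun ij : 'I_#|F| * 'I_#|F| => K ij.1 ij.2 != 0)) => [ij H | H].
    by exists ij.
  exfalso; move/negP: nrf; apply; apply/eqP/matrixP => a b; rewrite [RHS]mxE.
  by move: (H (a, b)) => /negbFE /eqP.
pose r := row i K.
have rB : r *m B = 0 by rewrite -row_mul mulmx_ker row0.
pose d e := if e \in F then r 0 (enum_rank_in He0 e) else 0.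
exists d; split.
  by move=> e; rewrite /d; case: (e \in F) => //; rewrite eqxx.
split; last first.
  by exists (enum_val j); rewrite /d enum_valP enum_valK_in /r mxE.
move=> v tight.
case: (boolP (v \in Tv)) => hv; last first.
  rewrite /x_delta big1 // => e ie; rewrite /d; case: ifP => // Fe.
  by move: hv; rewrite inE tight eqxx /= => /existsPn /(_ e); rewrite Fe /inc ie.
move/rowP: rB => /(_ (enum_rank_in hv v)); rewrite !mxE.
move=> h0.
have h : \sum_(k < #|F|) r 0 k * (inc (enum_val k) v)%:R = 0.
  by rewrite -[RHS]h0; apply: eq_bigr => k _; rewrite /B !mxE (enum_rankK_in hv hv).
rewrite (big_enum_rank He0) /= in h.
rewrite /x_delta big_mkcond /= -[RHS]h [RHS]big_mkcond /=.
apply: eq_bigr => e _; rewrite /d /inc.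
case: (boolP (e \in F)) => Fe; last by case: ifP.
rewrite (enum_rankK_in He0 Fe).
by case: ifP; rewrite ?mulr1 ?mulr0.
Qed.

Lemma xd_opp d v : xd (fun e => - d e) v = - xd d v.
Proof. by rewrite /x_delta sumrN. Qed.

Lemma decomp x : good x -> conv Mat x.
Proof.
suff H : forall n x, (mu x < n)%N -> good x -> conv Mat x by move=> gx; exact: (H (mu x).+1).
elim=> [|n IH] {}x // Hmu gx.
case: (set_0Vmem (Fs x)) => [HF | [e0 He0]]; first exact: int_case.
have [d [dF [dT dnz]]] := exists_d gx He0.
have [e1 [pe1 [g1 m1]]] := step gx dF dT dnz.
have dF' : forall e, - d e != 0 -> e \in Fs x by move=> e; rewrite oppr_eq0; apply: dF.
have dT' : forall v, xd x v = 1 -> xd (fun e => - d e) v = 0.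
  by move=> v /dT; rewrite xd_opp => ->; rewrite oppr0.
have dnz' : exists e, - d e != 0 by case: dnz => e He; exists e; rewrite oppr_eq0.
have [e2 [pe2 [g2 m2]]] := step gx dF' dT' dnz'.
have c1 := IH _ (leq_trans m1 Hmu) g1.
have c2 := IH _ (leq_trans m2 Hmu) g2.
have h0 : 0 <= e2 / (e1 + e2) by rewrite divr_ge0 // ?addr_ge0 // ltW.
have h1 : e2 / (e1 + e2) <= 1 by rewrite ler_pdivrMr ?addr_gt0 // mul1r lerDr ltW.
have := conv2 c1 c2 h0 h1.
have -> : (fun e => e2 / (e1 + e2) * (x e + e1 * d e) + (1 - e2 / (e1 + e2)) * (x e + e2 * - d e)) = x.
  apply/funext => e; field; lra.
by [].
Qed.

End Core.

Section Main1.
Variables (R : realType) (V E : finType) (tail head : E -> V).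
Hypothesis noloop : forall e, tail e != head e.

Local Notation xd := (@x_delta R V E tail head).
Local Notation xin := (@x_delta_in R V E tail head).

Lemma xin_split (y : E -> R) v :
  xd y v = xin y v + \sum_(e | ((tail e == v) || (head e == v)) && (head e != v)) y e.
Proof.
rewrite /x_delta (bigID (fun e => head e == v)) /=; congr (_ + _).
by apply: eq_bigl => e; case: (head e == v); rewrite ?orbT ?andbF.
Qed.

Lemma xin_le (y : E -> R) v : (forall e, 0 <= y e) -> xin y v <= xd y v.
Proof.
move=> H0; rewrite xin_split lerDl; apply: sumr_ge0 => e _; exact: H0.
Qed.

Lemma xin_tail (y : E -> R) e : (forall e, 0 <= y e) ->
  xin y (tail e) + y e <= xd y (tail e).
Proof.
move=> H0; rewrite xin_split lerD2l.
rewrite (bigD1 e) /=; last by rewrite eqxx eq_sym noloop.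
rewrite lerDl; apply: sumr_ge0 => i _; exact: H0.
Qed.

Lemma xin_head (y : E -> R) e : (forall e, 0 <= y e) -> y e <= xin y (head e).
Proof.
move=> H0; rewrite /x_delta_in (bigD1 e) //= lerDl; apply: sumr_ge0 => i _; exact: H0.
Qed.

Lemma relaxed_good y : relaxed_set tail head y ->
  good tail head (fun v => xin y v == 1) y.
Proof.
move=> [H0 [H1 H2]]; split => //; split => //.
have h01 : forall v, xin y v = 0 \/ xin y v = 1.
  move=> v; have [z hz] := H2 v.
  have a : 0 <= xin y v by apply: sumr_ge0 => e _; exact: H0.
  have b : xin y v <= 1 by apply: le_trans (H1 v); exact: xin_le.
  rewrite hz in a b *; rewrite ler0z in a.
  have b' : (z%:~R : R) <= (1 : int)%:~R by rewrite mulr1z.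
  rewrite ler_int in b'.
  have : (z = 0 \/ z = 1)%R by lia.
  by case => ->; [left|right].
move=> e ye.
have ype : 0 < y e by rewrite lt_neqAle eq_sym ye H0.
apply/andP; split.
  apply/negP => /eqP ht; have := xin_tail e H0; have := H1 (tail e); lra.
case: (h01 (head e)) => [h|->]; last by rewrite eqxx.
have := xin_head e H0; lra.
Qed.

Lemma match_relaxed (y : E -> R) : Mat tail head y -> relaxed_set tail head y.
Proof.
move=> [M [HM ->]]; split; first by move=> e; rewrite /char_vec ler0n.
split.
  move=> v; have := HM v; rewrite -(ler_nat R) => h; apply: le_trans h.
  have -> : [set e in M | (tail e == v) || (head e == v)] =
          [set e | ((tail e == v) || (head e == v)) && (e \in M)].
    by apply/setP => e; rewrite !inE andbC.
  rewrite -sum1dep_card natr_sum big_mkcondr /= /x_delta le_eqVlt; apply/orP; left.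
  apply/eqP; apply: eq_bigr => e _; rewrite /char_vec; by case: (e \in M).
move=> v; exists (\sum_(e | head e == v) ((e \in M) : nat))%N%:Z.
by rewrite /x_delta_in /char_vec -natr_sum.
Qed.

Lemma part1 : @matching_polytope R V E tail head = conv (relaxed_set tail head).
Proof.
apply/funext => x; apply/propext; split.
  by move=> H; apply: (conv_mono (S := Mat tail head)) H => y; exact: match_relaxed.
move=> H; apply: (conv_conv (S := Mat tail head)).
apply: conv_mono H => y Hy; exact: (decomp noloop (relaxed_good Hy)).
Qed.

End Main1.

Section Main2.
Variables (R : realType) (V E : finType) (tail head : E -> V).

Lemma sum_rank (F : E -> R) : \sum_(j < #|E|) F (enum_val j) = \sum_e F e.
Proof.
rewrite (reindex (@enum_rank E)) /=; last by apply: onW_bij; exact: enum_rank_bij.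
by apply: eq_bigr => e _; rewrite enum_rankK.
Qed.

Lemma sum_rank' (G : 'I_#|E| -> R) : \sum_(j < #|E|) G j = \sum_e G (enum_rank e).
Proof. by rewrite (reindex (@enum_rank E)) //; apply: onW_bij; exact: enum_rank_bij. Qed.

Definition Amx : 'M[R]_(#|E| + #|V|, #|E|) :=
  \matrix_(i, j) match split i with
                 | inl a => if a == j then -1 else 0
                 | inr w => ((tail (enum_val j) == enum_val w) ||
                             (head (enum_val j) == enum_val w))%:R
                 end.
Definition bmx : 'cV[R]_(#|E| + #|V|) :=
  \col_i match split i with inl _ => 0 | inr _ => 1 end.
Definition Smx : 'M[R]_(#|V|, #|E|) :=
  \matrix_(w, j) (head (enum_val j) == enum_val w)%:R.

Definition xof (y : 'cV[R]_#|E|) : E -> R := fun e => y (enum_rank e) 0.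

Lemma hl (a : 'I_#|E|) : split (lshift #|V| a) = inl a.
Proof. exact: (unsplitK (inl a : 'I_#|E| + 'I_#|V|)). Qed.
Lemma hr (w : 'I_#|V|) : split (rshift #|E| w) = inr w.
Proof. exact: (unsplitK (inr w : 'I_#|E| + 'I_#|V|)). Qed.

Lemma Ay_l (y : 'cV[R]_#|E|) a : (Amx *m y) (lshift #|V| a) 0 = - y a 0.
Proof.
rewrite !mxE (bigD1 a) //= !mxE hl eqxx big1 ?addr0 ?mulN1r // => j ja.
by rewrite !mxE hl eq_sym (negbTE ja) mul0r.
Qed.

Lemma Ay_r (y : 'cV[R]_#|E|) w : (Amx *m y) (rshift #|E| w) 0 = x_delta tail head (xof y) (enum_val w).
Proof.
rewrite mxE /x_delta [RHS]big_mkcond /= sum_rank'; apply: eq_bigr => j _.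
rewrite !mxE hr /xof enum_rankK; case: ifP => _; by rewrite ?mul1r ?mul0r.
Qed.

Lemma b_l a : bmx (lshift #|V| a) 0 = 0.
Proof. by rewrite mxE hl. Qed.
Lemma b_r w : bmx (rshift #|E| w) 0 = 1.
Proof. by rewrite mxE hr. Qed.

Lemma Sy (y : 'cV[R]_#|E|) w : (Smx *m y) w 0 = x_delta_in tail head (xof y) (enum_val w).
Proof.
rewrite mxE /x_delta_in [RHS]big_mkcond /= sum_rank'; apply: eq_bigr => j _.
rewrite !mxE /xof enum_rankK; case: ifP => _; by rewrite ?mul1r ?mul0r.
Qed.

Hypothesis Hg : oriented_simple_graph tail head.

Lemma part2 : exists (l m : nat) (A : 'M[R]_(m, l)) (b : 'cV[R]_m)
            (S : 'M[R]_(#|V|, l)) (s : 'cV[R]_#|V|)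
            (T : 'M[R]_(#|E|, l)) (t : 'cV[R]_#|E|),
       (m <= 2 * (#|V|.+1) ^ 2)%N /\
       milef_with (@matching_polytope R V E tail head) A b S s T t.
Proof.
have [noloop simple] := Hg.
exists #|E|, (#|E| + #|V|)%N, Amx, bmx, Smx, 0, 1%:M, 0.
split.
  have inj : injective (fun e => (tail e, head e)).
    move=> e f [h1 h2]; apply: simple; by rewrite h1 h2 !eqxx.
  have := @leq_card _ _ _ inj; rewrite card_prod => h; nia.
rewrite /milef_with part1 //; congr (conv _); apply/funext => x; apply/propext; split.
  move=> Hx; exists (\col_j x (enum_val j)).
  have xo : xof (\col_j x (enum_val j)) = x.
    by apply/funext => e; rewrite /xof mxE enum_rankK.
  have [H0 [H1 H2]] := Hx.
  split.
    move=> i; rewrite -(splitK i); case: (split i) => [a|w] /=.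
      by rewrite Ay_l b_l mxE oppr_le0.
    by rewrite Ay_r b_r xo.
  split.
    by move=> j; rewrite addr0 Sy xo.
  by apply/funext => e; rewrite addr0 mul1mx -/(xof _ e) xo.
move=> [y [Hc [Hi ->]]].
have -> : (fun e => (1%:M *m y + 0) (enum_rank e) 0) = xof y.
  by apply/funext => e; rewrite addr0 mul1mx.
split.
  move=> e; have := Hc (lshift #|V| (enum_rank e)).
  by rewrite Ay_l b_l oppr_le0.
split.
  move=> v; have := Hc (rshift #|E| (enum_rank v)).
  by rewrite Ay_r b_r enum_rankK.
by move=> v; have := Hi (enum_rank v); rewrite addr0 Sy enum_rankK.
Qed.

End Main2.

Unset Implicit Arguments.

Theorem mainTheorem17 :
  (forall (R : realType) (V E : finType) (tail head : E -> V),
     oriented_simple_graph tail head ->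
     @matching_polytope R V E tail head = conv (relaxed_set tail head)) /\
  (exists C : nat, forall (R : realType) (V E : finType) (tail head : E -> V),
     oriented_simple_graph tail head ->
     exists (l m : nat) (A : 'M[R]_(m, l)) (b : 'cV[R]_m)
            (S : 'M[R]_(#|V|, l)) (s : 'cV[R]_#|V|)
            (T : 'M[R]_(#|E|, l)) (t : 'cV[R]_#|E|),
       (m <= C * (#|V|.+1) ^ 2)%N /\
       milef_with (@matching_polytope R V E tail head) A b S s T t).
Proof.
split.
  move=> R V E tail head [noloop _]; exact: part1.
exists 2%N => R V E tail head Hg; exact: part2.
Qed.
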